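(* Let $\mathbb{T}$ be the Tribonacci sequence and, for $n\ge1$, let $C(n)$ be the number of distinct nonempty words $\omega$ such that $\omega\omega\omega$ is a factor of $\mathbb{T}[1,n]$. Then $C(n)=0$ for $n\leq57$. For $n\geq58$, let $m$ be such that $t_{m-1}+2t_{m-4}\leq n<t_{m}+2t_{m-3}$; then $m\geq7$ and \begin{equation*} C(n)= \begin{cases} n-\frac{1}{2}(4t_{m-1}-t_{m-2}-3t_{m-3}+m-6),&n\leq\frac{3t_{m-1}-t_{m-3}-3}{2};\\ \frac{1}{2}(t_{m-5}+t_{m-6}-m+3),&\text{otherwise}. \end{cases} \end{equation*}
   Context: The Tribonacci sequence $\mathbb{T}=x_1x_2x_3\cdots$ is the fixed point (infinite word starting with $a$) of the substitution $\sigma(a)=ab$, $\sigma(b)=ac$, $\sigma(c)=a$ over $\{a,b,c\}$. For $n\ge1$, $\mathbb{T}[1,n]=x_1\cdots x_n$ is its prefix of length $n$. The Tribonacci numbers are $t_m=|\sigma^m(a)|$ for $m\ge0$, with $t_{-2}=0$, $t_{-1}=1$; thus $t_0=1,t_1=2,t_2=4$ and $t_m=t_{m-1}+t_{m-2}+t_{m-3}$. *)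

(* Defs.v *)
From HB Require Import structures.
From mathcomp Require Import all_boot all_order all_algebra.
Set Implicit Arguments. Unset Strict Implicit. Unset Printing Implicit Defensive.

Inductive letter := La | Lb | Lc.
Definition letter_eqb (x y : letter) : bool :=
  match x, y with La, La | Lb, Lb | Lc, Lc => true | _, _ => false end.
Lemma letter_eqP : Equality.axiom letter_eqb.
Proof. by case; case; constructor. Qed.
HB.instance Definition _ := hasDecEq.Build letter letter_eqP.

Definition word := seq letter.

Definition sigma_letter (x : letter) : word :=
  match x with La => [:: La; Lb] | Lb => [:: La; Lc] | Lc => [:: La] end.
Definition sigma (w : word) : word := flatten (map sigma_letter w).

Definition sigma_pow_a (m : nat) : word := iter m sigma [:: La].

Definition trib (m : nat) : nat := size (sigma_pow_a m).

(* x_i, i >= 1 : the i-th letter of the fixed point; sigma^i(a) is a prefix of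
   the fixed point of length t_i >= i+1, so it contains x_i. *)
Definition tx (i : nat) : letter := nth La (sigma_pow_a i) i.-1.

Definition Tprefix (n : nat) : word := [seq tx i | i <- iota 1 n].

(* all factors (contiguous subwords) of s; every word w with www a factor of s
   is itself a factor of s, so this list contains all candidates *)
Definition factors (s : word) : seq word :=
  flatten [seq [seq take k (drop i s) | i <- iota 0 (size s).+1]
          | k <- iota 0 (size s).+1].

Definition cube_roots (s : word) : seq word :=
  undup [seq w <- factors s | (0 < size w) && infix (w ++ w ++ w) s].

Definition C (n : nat) : nat := size (cube_roots (Tprefix n)).

Goal trib 0 = 1%N /\ trib 1 = 2%N /\ trib 2 = 4%N /\ trib 3 = 7%N. Proof. by []. Qed.
Goal Tprefix 8 = [:: La; Lb; La; Lc; La; Lb; La; La]. Proof. by []. Qed.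

(* Main.v *)
Require Import Defs.
From mathcomp Require Import all_boot all_order all_algebra.
From mathcomp Require Import zify lra.


Lemma sigma_cat u v : sigma (u ++ v) = sigma u ++ sigma v.
Proof. by rewrite /sigma map_cat flatten_cat. Qed.

Lemma sigma_cons l w : sigma (l :: w) = sigma_letter l ++ sigma w.
Proof. by []. Qed.

Definition bl (l : letter) := size (sigma_letter l).

Lemma bl_ge1 l : 1 <= bl l. Proof. by case: l. Qed.
Lemma bl_le2 l : bl l <= 2. Proof. by case: l. Qed.

Lemma size_sigma_cons l w : size (sigma (l :: w)) = bl l + size (sigma w).
Proof. by rewrite sigma_cons size_cat. Qed.

Lemma size_sigma_ge w : size w <= size (sigma w).
Proof. elim: w => //= l w IH; rewrite size_sigma_cons; have := bl_ge1 l; lia. Qed.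

Lemma iter_sigma_cat m u v : iter m sigma (u ++ v) = iter m sigma u ++ iter m sigma v.
Proof. by elim: m => //= m ->; rewrite sigma_cat. Qed.

Notation spa := sigma_pow_a.

Lemma spaS m : spa m.+1 = sigma (spa m). Proof. by []. Qed.

Lemma spa_split m : spa m.+1 = spa m ++ iter m sigma [:: Lb].
Proof. by rewrite /sigma_pow_a iterSr -iter_sigma_cat. Qed.

Lemma iterb m : iter m.+1 sigma [:: Lb] = spa m ++ iter m sigma [:: Lc].
Proof. by rewrite iterSr -iter_sigma_cat. Qed.

Lemma iterc m : iter m.+1 sigma [:: Lc] = spa m.
Proof. by rewrite iterSr. Qed.

Lemma spa3 m : spa m.+3 = spa m.+2 ++ spa m.+1 ++ spa m.
Proof. by rewrite spa_split iterb iterc. Qed.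

Lemma trib_rec m : trib m.+3 = trib m.+2 + trib m.+1 + trib m.
Proof. by rewrite /trib spa3 !size_cat addnA. Qed.

Lemma trib0 : trib 0 = 1. Proof. by []. Qed.
Lemma trib1 : trib 1 = 2. Proof. by []. Qed.
Lemma trib2 : trib 2 = 4. Proof. by []. Qed.

Lemma tribS m : trib m < trib m.+1.
Proof.
rewrite /trib spa_split size_cat.
have : size [:: Lb] <= size (iter m sigma [:: Lb]).
  elim: m => //= m IH; have := size_sigma_ge (iter m sigma [:: Lb]); lia.
rewrite /=; lia.
Qed.

Lemma trib_ge m : m < trib m.
Proof. elim: m => // m IH; have := tribS m; lia. Qed.

Lemma trib_mono m m' : m <= m' -> trib m <= trib m'.
Proof.
move=> /subnK <-; elim: (m' - m) => // d IH; rewrite addSn; have := tribS (d + m); lia.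
Qed.

Arguments trib_mono {m m'}.

Lemma trib_lt m m' : m < m' -> trib m < trib m'.
Proof. move=> H; have := tribS m; have := trib_mono H; lia. Qed.

Lemma trib_ltI m m' : trib m < trib m' -> m < m'.
Proof. move=> H; case: (ltnP m m') => // /trib_mono; lia. Qed.

Lemma trib_inj m m' : trib m = trib m' -> m = m'.
Proof.
move=> H; case: (ltngtP m m') => // /trib_lt; lia.
Qed.

Lemma spa_prefix {m m'} : m <= m' -> exists r, spa m' = spa m ++ r.
Proof.
move=> /subnK <-; elim: (m' - m) => [|d [r IH]]; first by exists [::]; rewrite cats0.
rewrite addSn spa_split IH; by exists (r ++ iter (d + m) sigma [:: Lb]); rewrite catA.
Qed.

Definition x (i : nat) : letter := nth La (spa i.+1) i.

Lemma nth_spa m i : i < trib m -> nth La (spa m) i = x i.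
Proof.
move=> H; rewrite /x.
have [r1 E1] := spa_prefix (leq_maxl m i.+1).
have [r2 E2] := spa_prefix (leq_maxr m i.+1).
have Hi : i < size (spa i.+1) by have := trib_ge i.+1; rewrite /trib; lia.
have H' : i < size (spa m) by [].
have : nth La (spa (maxn m i.+1)) i = nth La (spa (maxn m i.+1)) i by [].
by rewrite {1}E1 {1}E2 !nth_cat H' Hi.
Qed.

Definition sub (i n : nat) : word := mkseq (fun r => x (i + r)) n.

Lemma size_sub i n : size (sub i n) = n. Proof. by rewrite size_mkseq. Qed.
Lemma nth_sub i n r : r < n -> nth La (sub i n) r = x (i + r).
Proof. by move=> H; rewrite nth_mkseq. Qed.

Lemma sub_eqP i n w : size w = n -> (forall r, r < n -> x (i + r) = nth La w r) -> sub i n = w.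
Proof.
move=> Hs H; apply: (@eq_from_nth _ La); rewrite size_sub //.
by move=> r Hr; rewrite nth_sub // H.
Qed.

Lemma sub0_spa m : sub 0 (trib m) = spa m.
Proof. by apply: sub_eqP => // r Hr; rewrite nth_spa. Qed.

Lemma Tprefix_sub n : Tprefix n = sub 0 n.
Proof.
apply: (@eq_from_nth _ La); first by rewrite size_sub size_map size_iota.
move=> r; rewrite size_map size_iota => Hr.
by rewrite nth_sub // (nth_map 0) ?size_iota // nth_iota.
Qed.

Lemma take_sub i {n N} : n <= N -> take n (sub i N) = sub i n.
Proof.
move=> H; symmetry; apply: sub_eqP; first by rewrite size_take size_sub; case: ltngtP H; lia.
by move=> r Hr; rewrite nth_take // nth_sub //; lia.
Qed.

Lemma drop_sub i a n : drop a (sub i n) = sub (i + a) (n - a).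
Proof.
symmetry; apply: sub_eqP; first by rewrite size_drop size_sub.
by move=> r Hr; rewrite nth_drop nth_sub ?addnA //; lia.
Qed.

Lemma subD i a b : sub i (a + b) = sub i a ++ sub (i + a) b.
Proof.
apply: sub_eqP; first by rewrite size_cat !size_sub.
move=> r Hr; rewrite nth_cat size_sub; case: ltnP => H.
  by rewrite nth_sub.
by rewrite nth_sub; [congr x; lia | lia].
Qed.

Definition A (j : nat) : nat := size (sigma (sub 0 j)).

Lemma sigma_take_prefix w j : sigma w = sigma (take j w) ++ sigma (drop j w).
Proof. by rewrite -sigma_cat cat_take_drop. Qed.

Lemma sub0_A j : sub 0 (A j) = sigma (sub 0 j).
Proof.
have Hj : j <= trib j by have := trib_ge j; lia.
have E : sub 0 j = take j (spa j) by rewrite -sub0_spa take_sub.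
have E2 := sigma_take_prefix (spa j) j.
have HA : A j <= trib j.+1.
  by rewrite /A /trib spaS E2 size_cat E; lia.
rewrite -(take_sub 0 HA) sub0_spa spaS E2 -E.
by rewrite /A take_size_cat.
Qed.

Lemma sub0S j : sub 0 j.+1 = sub 0 j ++ [:: x j].
Proof. by rewrite -addn1 subD add0n /sub /mkseq /= addn0. Qed.

Lemma A0 : A 0 = 0. Proof. by []. Qed.

Lemma AS j : A j.+1 = A j + bl (x j).
Proof. by rewrite /A sub0S sigma_cat size_cat /sigma /= cats0. Qed.

Lemma block j {r} : r < bl (x j) -> x (A j + r) = nth La (sigma_letter (x j)) r.
Proof.
move=> Hr.
have H := sub0_A j.+1.
have : nth La (sub 0 (A j.+1)) (A j + r) = nth La (sigma (sub 0 j.+1)) (A j + r) by rewrite H.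
rewrite nth_sub; last by rewrite AS; lia.
by rewrite sub0S sigma_cat nth_cat /A ltnNge leq_addr /= addKn /sigma /= cats0.
Qed.

Lemma xA j : x (A j) = La.
Proof. have := @block j 0 (bl_ge1 (x j)); rewrite addn0 => ->; by case: (x j). Qed.

Definition nxt (l : letter) := match l with La => Lb | Lb => Lc | Lc => La end.
Definition phi (l : letter) := match l with Lb => La | Lc => Lb | La => Lc end.

Lemma xA1 j : x (A j).+1 = nxt (x j).
Proof.
case E: (x j) => /=.
- have H : 1 < bl (x j) by rewrite E.
  by have := @block j 1 H; rewrite E addn1.
- have H : 1 < bl (x j) by rewrite E.
  by have := @block j 1 H; rewrite E addn1.
- by rewrite -addn1 -(xA j.+1) AS E.
Qed.

Lemma phi_nxt l : phi (nxt l) = l. Proof. by case: l. Qed.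

Lemma x_phi j : x j = phi (x (A j).+1).
Proof. by rewrite xA1 phi_nxt. Qed.

Lemma A_lt j : A j < A j.+1.
Proof. rewrite AS; have := bl_ge1 (x j); lia. Qed.

Lemma A_mono j j' : j <= j' -> A j <= A j'.
Proof.
move=> /subnK <-; elim: (j' - j) => // d IH; rewrite addSn; have := A_lt (d + j); lia.
Qed.

Arguments A_mono {j j'}.

Lemma A_ltm j j' : j < j' -> A j < A j'.
Proof. move=> H; have := A_lt j; have := A_mono H; lia. Qed.

Lemma A_ltI j j' : A j < A j' -> j < j'.
Proof. move=> H; case: (ltnP j j') => // /A_mono; lia. Qed.

Lemma A_inj j j' : A j = A j' -> j = j'.
Proof. move=> H; case: (ltngtP j j') => // /A_ltm; lia. Qed.

Lemma A_ge j : j <= A j.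
Proof. elim: j => // j IH; have := A_lt j; lia. Qed.

Lemma locate s : exists j, A j <= s < A j.+1.
Proof.
elim: s => [|s [j /andP[H1 H2]]]; first by exists 0; have := A_lt 0; rewrite A0; lia.
case: (ltnP s.+1 (A j.+1)) => H3; first by exists j; lia.
exists j.+1; have := A_lt j.+1; lia.
Qed.

Lemma a_start {s} : x s = La -> exists j, s = A j.
Proof.
move=> Hs; have [j /andP[H1 H2]] := locate s.
case: (ltnP (A j) s) => H3; last by exists j; lia.
have Es : s = (A j).+1 by move: H2; rewrite AS; have := bl_le2 (x j); lia.
move: Hs; rewrite Es xA1.
case E: (x j) => //= _.
by move: H2; rewrite Es AS E /bl /=; lia.
Qed.

Lemma nota {s} : x s <> La -> 0 < s /\ x s.-1 = La /\ x s.+1 = La.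
Proof.
move=> Hs; have [j /andP[H1 H2]] := locate s.
case: (ltnP (A j) s) => H3.
2: { exfalso. apply: Hs. have E : s = A j by lia. rewrite E. exact: xA. }
have Es : s = (A j).+1 by move: H2; rewrite AS; have := bl_le2 (x j); lia.
have Hb : bl (x j) = 2.
  move: H2; rewrite AS Es; have := bl_le2 (x j); lia.
split; first by lia.
split; first by rewrite Es /= xA.
by rewrite Es -(xA j.+1) AS Hb addn2.
Qed.

Lemma last_block j : x (A j.+1).-1 = nxt (x j).
Proof.
rewrite AS; case E: (x j); rewrite /bl /=.
- by have := xA1 j; rewrite E /= => <-; congr x; lia.
- by have := xA1 j; rewrite E /= => <-; congr x; lia.
- by rewrite addn1 /= xA.
Qed.

Lemma no_aaa s : x s = La -> x s.+1 = La -> x s.+2 = La -> False.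
Proof.
move=> H0 H1 H2.
have [j Ej] := a_start H0.
have Hj : x j = Lc by move: H1; rewrite Ej xA1; case: (x j).
have E1 : s.+1 = A j.+1 by rewrite Ej AS Hj addn1.
have Hj1 : x j.+1 = Lc by move: H2; rewrite E1 xA1; case: (x j.+1).
have [_ [_ H]] := @nota j ltac:(by rewrite Hj).
by rewrite Hj1 in H.
Qed.

Lemma A2 j : A j + 3 <= A j.+2.
Proof.
rewrite !AS; case E: (x j); first [by have := bl_ge1 (x j.+1); rewrite /bl /=; lia | idtac].
have [_ [_ H]] := @nota j ltac:(by rewrite E).
by rewrite H /bl /=; lia.
Qed.


Definition occ (w : word) (i : nat) := forall r, r < size w -> x (i + r) = nth La w r.

Lemma occ_cons l w j : occ (l :: w) j <-> x j = l /\ occ w j.+1.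
Proof.
split.
- move=> H; split; first by have := H 0 isT; rewrite addn0.
  by move=> r Hr; have := H r.+1 Hr; rewrite addnS.
- move=> [H1 H2] [|r] Hr /=; first by rewrite addn0.
  by rewrite addnS H2.
Qed.

Lemma sigma_a_head w : nth La (sigma w ++ [:: La]) 0 = La.
Proof. by case: w => [|[] w]. Qed.

Lemma wlift w j : occ w j -> occ (sigma w ++ [:: La]) (A j).
Proof.
elim: w j => [|l w IH] j.
  by move=> _ [|r] //= _; rewrite addn0 xA.
move=> /occ_cons [Hx Hw] r.
rewrite sigma_cons -catA size_cat nth_cat => Hr.
case: ltnP => H.
  by rewrite -Hx @block // Hx.
have := IH _ Hw (r - bl l).
rewrite AS Hx -addnA subnKC //; apply; rewrite /bl in H *; lia.
Qed.

Lemma desub w j : occ (sigma w ++ [:: La]) (A j) -> occ w j.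
Proof.
elim: w j => [|l w IH] j //.
rewrite sigma_cons -catA => H.
have Hl : x j = l.
  have Hs : 1 < size (sigma_letter l ++ sigma w ++ [:: La]).
    by rewrite !size_cat /=; have := bl_ge1 l; rewrite /bl; lia.
  have H1 := H 1 Hs.
  rewrite x_phi -addn1 H1; clear H H1 Hs IH.
  by case: l => //=; rewrite sigma_a_head.
apply/occ_cons; split => //.
apply: IH => r Hr.
have := H (bl l + r); rewrite size_cat nth_cat -/(bl l) AS Hl.
rewrite ifN; last by rewrite -leqNgt leq_addr.
rewrite addKn addnA.
apply; rewrite /bl; lia.
Qed.

Lemma A_size w j n : occ w j -> n <= size w -> A (j + n) = A j + size (sigma (take n w)).
Proof.
move=> Hw; elim: n => [|n IH] H; first by rewrite addn0 take0 /sigma /= addn0.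
rewrite addnS AS IH; last by lia.
rewrite (take_nth La) // -cats1 sigma_cat size_cat -addnA; congr (_ + (_ + _)).
by rewrite Hw // /sigma /= cats0.
Qed.

Definition Wstep (w : word) : word := sigma w ++ [:: La].
Definition Wf (k : nat) : word := iter k Wstep [:: La; La].
Definition ell k := size (Wf k).
Lemma WfS k : Wf k.+1 = sigma (Wf k) ++ [:: La]. Proof. by []. Qed.

Lemma ellS k : ell k.+1 = (size (sigma (Wf k))).+1.
Proof. by rewrite /ell WfS size_cat addn1. Qed.

Lemma ell_lt k : ell k < ell k.+1.
Proof. rewrite ellS; have := size_sigma_ge (Wf k); rewrite /ell; lia. Qed.

Lemma ell_mono k k' : k <= k' -> ell k <= ell k'.
Proof.
move=> /subnK <-; elim: (k' - k) => // d IH; rewrite addSn; have := ell_lt (d + k); lia.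
Qed.

Lemma W_take k : trib k <= ell k /\ take (trib k) (Wf k) = spa k.
Proof.
elim: k => [|k [IH1 IH2]] //.
have E : Wf k = spa k ++ drop (trib k) (Wf k) by rewrite -{1}IH2 cat_take_drop.
rewrite /ell WfS E !sigma_cat -spaS -catA.
split; first by rewrite !size_cat /trib; lia.
by rewrite take_size_cat.
Qed.

Lemma sigma_nonnil {w} : w <> [::] -> exists w', sigma w = La :: w'.
Proof. by case: w => // [[]] w _; [exists (Lb :: sigma w) | exists (Lc :: sigma w) | exists (sigma w)]. Qed.

Lemma W_per k : exists Y Z, Wf k = spa k ++ Y /\ Wf k = Y ++ Z /\ Z <> [::].
Proof.
elim: k => [|k [Y [Z [E1 [E2 HZ]]]]]; first by exists [:: La], [:: La].
have [Z' EZ] := sigma_nonnil HZ.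
exists (sigma Y ++ [:: La]), (Z' ++ [:: La]); split.
  by rewrite WfS E1 sigma_cat -catA.
split => //.
by rewrite WfS {1}E2 sigma_cat EZ -!catA.
by case: (Z').
Qed.

Lemma W_nth_per k r : r + trib k < ell k -> nth La (Wf k) (r + trib k) = nth La (Wf k) r.
Proof.
have [Y [Z [E1 [E2 _]]]] := W_per k.
move=> H.
have Hs : size (Wf k) = trib k + size Y by rewrite {1}E1 size_cat.
rewrite {1}E1 nth_cat /trib ltnNge leq_addl /= addnK.
rewrite E2 nth_cat.
have -> : r < size Y by move: H; rewrite /ell Hs /trib; lia.
by [].
Qed.

Definition Vstep := Wstep.
Definition Vf (j : nat) : word := iter j Wstep [::].
Definition ev j := size (Vf j).

Lemma W3 j : Wf j.+3 = spa j.+3 ++ spa j.+3 ++ spa j.+3 ++ Vf j.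
Proof.
elim: j => [|j IH]; first by [].
rewrite /Wf iterS -/(Wf _) IH /Wstep !sigma_cat -!catA.
by [].
Qed.

Lemma V3 j : Vf j.+3 = spa j.+3 ++ Vf j.
Proof.
elim: j => [|j IH]; first by [].
by rewrite /Vf iterS -/(Vf _) IH /Wstep sigma_cat -catA.
Qed.

Lemma ell3 j : ell j.+3 = 3 * trib j.+3 + ev j.
Proof. by rewrite /ell W3 !size_cat /trib /ev; lia. Qed.

Lemma ev3 j : ev j.+3 = trib j.+3 + ev j.
Proof. by rewrite /ev V3 size_cat. Qed.

Lemma ev0 : ev 0 = 0. Proof. by []. Qed.
Lemma ev1 : ev 1 = 1. Proof. by []. Qed.
Lemma ev2 : ev 2 = 3. Proof. by []. Qed.
Lemma ell0 : ell 0 = 2. Proof. by []. Qed.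
Lemma ell1 : ell 1 = 5. Proof. by []. Qed.
Lemma ell2 : ell 2 = 11. Proof. by []. Qed.

Lemma ev_lt j : ev j < trib j.+1.
Proof.
suff : ev j < trib j.+1 /\ ev j.+1 < trib j.+2 /\ ev j.+2 < trib j.+3 by case.
elim: j => [|j [H1 [H2 H3]]]; first by [].
split => //; split => //.
rewrite ev3 (trib_rec j.+1); lia.
Qed.


Definition per p i e := forall s, i <= s -> s + p < e -> x s = x (s + p).
Definition LM p i := i = 0 \/ x i.-1 <> x (i.-1 + p).

Lemma A_add a d : A a + d <= A (a + d).
Proof. elim: d => [|d IH]; first by rewrite !addn0. rewrite !addnS; have := A_lt (a + d); lia. Qed.

Arguments A_ltm {j j'}.
Arguments A_ltI {j j'}.

Lemma x0 : x 0 = La. Proof. by have := xA 0; rewrite A0. Qed.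

Theorem runs p : forall i e, 0 < p -> per p i e -> LM p i -> i + 3 * p <= e.+1 ->
  exists k, p = trib k /\ e - i <= ell k /\ occ (Wf k) i.
Proof.
elim/ltn_ind: p => p IHp i e Hp Hper HLM Hlen.
case: (ltnP 1 p) => Hp2; last first.
  have E1 : p = 1 by lia.
  subst p.
  have H01 : x i = x i.+1 by rewrite -addn1; apply: Hper; lia.
  have Hxi : x i = La.
    case E: (x i) => //; have [_ [_ H]] := @nota i ltac:(by rewrite E);
    by move: H01; rewrite E H.
  exists 0; split => //; split.
  - rewrite ell0; case: (leqP e i.+2) => H; first lia.
    exfalso; have H12 : x i.+1 = x i.+2 by have := Hper i.+1; rewrite addn1; apply; lia.
    by apply: (@no_aaa i) => //; congruence.
  - move=> [|[|r]] //= _; by rewrite ?addn0 ?addn1 -?H01.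
have Hxi : x i = La.
  case: HLM => [-> | HL]; first exact: x0.
  case E: (x i) => //; exfalso.
  - have [Hi [Hm _]] := @nota i ltac:(by rewrite E).
    have Hp' : x (i + p) = x i by symmetry; apply: Hper; lia.
    have [_ [Hm' _]] := @nota (i+p) ltac:(by rewrite Hp' E).
    apply: HL; rewrite Hm -Hm'; congr x; lia.
  - have [Hi [Hm _]] := @nota i ltac:(by rewrite E).
    have Hp' : x (i + p) = x i by symmetry; apply: Hper; lia.
    have [_ [Hm' _]] := @nota (i+p) ltac:(by rewrite Hp' E).
    apply: HL; rewrite Hm -Hm'; congr x; lia.
have [j Ej] := a_start Hxi.
have Hxip : x (i + p) = La by rewrite -Hxi; symmetry; apply: Hper; lia.
have [j2 Ej2] := a_start Hxip.
have Hjj2 : j < j2 by apply: A_ltI; lia.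
pose q := j2 - j.
have Hq : A (j + q) = A j + p by rewrite /q subnKC; lia.
pose P := fun r => (j <= r) && (e <= A r + p + 1).
have exP : exists r, P r.
  exists e; apply/andP; have := A_ge e; have := A_ge j; split; lia.
case: (ex_minnP exP) => r0 Pr0 Hmin.
move: Pr0 => /andP[Hjr0' Her0].
have Hr0 : forall r, j <= r < r0 -> A r + p + 1 < e.
  move=> r /andP[H1 H2]; case: (ltnP (A r + p + 1) e) => // H3.
  have := Hmin r; rewrite /P H1 H3 => /(_ isT); lia.
have Hjr0 : j < r0.
  case: (ltngtP j r0) => // H3; first lia.
  move: Her0; rewrite -H3; lia.
have HL : forall r, j <= r < r0 -> A (r + q) = A r + p -> x r = x (r + q).
  move=> r Hr HA; rewrite (x_phi r) (x_phi (r + q)) HA.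
  have Hj : A j <= A r by apply: A_mono; lia.
  have := Hr0 r Hr; rewrite -addnS => H.
  have E : x (A r).+1 = x ((A r).+1 + p) by apply: Hper; lia.
  rewrite E; congr (phi (x _)); lia.
have HS : forall d, j + d <= r0 -> A (j + d + q) = A (j + d) + p.
  elim=> [|d IH] Hd; first by rewrite addn0.
  rewrite addnS addSn !AS IH; last by lia.
  rewrite -HL //; [lia | apply/andP; split; lia | apply: IH; lia].
have HS' : forall r, j <= r <= r0 -> A (r + q) = A r + p.
  move=> r /andP[H1 H2]; have := HS (r - j); rewrite subnKC //; apply; lia.
have Hq1 : 0 < q by rewrite /q; lia.
have Hqp : q < p.
  case: (ltnP 1 q) => H.
    have := A_add (j.+2) (q - 2); have := A2 j.
    have -> : j.+2 + (q - 2) = j + q by lia.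
    lia.
  have Eq : q = 1 by lia.
  move: Hq; rewrite Eq addn1 AS; have := bl_le2 (x j); lia.
pose g := r0 + q.
have Hperd : per q j g.
  move=> s H1 H2; apply: HL; [apply/andP; split; rewrite /g in H2; lia | apply: HS'; apply/andP; split; rewrite /g in H2; lia].
have HLMd : LM q j.
  case: (posnP j) => Hj0; first by left.
  right => Heq.
  case: HLM => [Hi0 | HLM].
    by move: Ej; rewrite Hi0 => /esym; have := A_ltm Hj0; rewrite A0; lia.
  apply: HLM.
  have Ei1 : i.-1 = (A (j.-1).+1).-1 by rewrite prednK // Ej.
  have Ei2 : i.-1 + p = (A (j.-1 + q).+1).-1.
    rewrite -addSn prednK // Hq -Ej; have : 0 < i by rewrite Ej; have := A_ltm Hj0; rewrite A0; lia.
    lia.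
  rewrite Ei2 Ei1 !last_block; congr nxt.
  by move: Heq; rewrite -subn1; congr (x _ = x _); lia.
have Hlend : j + 3 * q <= g.+1.
  rewrite /g; case: (ltnP r0 (j + q)) => H1.
    have := A_ltm H1; rewrite Hq; lia.
  case: (ltnP (r0 + 1) (j + 2 * q)) => H2 //; last by lia.
  have E := HS' (r0 - q) ltac:(apply/andP; split; lia).
  rewrite subnK // in E; last by lia.
  have := A2 (r0 - q); have := @A_mono (r0 - q).+2 (j + q) ltac:(lia).
  rewrite Hq; lia.
have [k [Ek [Hgk Hocc]]] := IHp q Hqp j g Hq1 Hperd HLMd Hlend.
have [Htk Htake] := W_take k.
exists k.+1; split; last split.
- have := @A_size _ _ _ Hocc Htk; rewrite Htake -Ek Hq -spaS -/(trib k.+1); lia.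
- have E := HS' r0 ltac:(apply/andP; split; lia).
  have := @A_mono g (j + ell k) ltac:(lia).
  have := @A_size _ _ _ Hocc (leqnn (ell k)); rewrite take_size -/(ell k) => ->.
  rewrite ellS /g E; lia.
- by rewrite Ej WfS; apply: wlift.
Qed.


Arguments runs {p i e}.

Definition F k := trib k.+2 + trib k.+1.

Lemma AF k : A (F k) = F k.+1.
Proof.
have HF : F k <= trib k.+3 by rewrite /F trib_rec; lia.
have E : sub 0 (F k) = spa k.+2 ++ spa k.+1.
  by rewrite -(take_sub 0 HF) sub0_spa spa3 catA take_size_cat // size_cat.
by rewrite /A E sigma_cat -!spaS size_cat /F.
Qed.

Lemma first_occ k : occ (Wf k) (F k) /\ forall i, occ (Wf k) i -> F k <= i.
Proof.
elim: k => [|k [IH1 IH2]].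
  split; first by move=> [|[|r]] //= _.
  move=> i Hocc; case: (leqP 6 i) => // Hi.
  have H0 := Hocc 0 isT; have H1 := Hocc 1 isT; rewrite /= addn0 in H0; rewrite /= addn1 in H1.
  by clear Hocc; move: Hi H0 H1; case: i => [|[|[|[|[|[|i]]]]]].
split; first by rewrite -AF /Wf iterS; apply: wlift.
move=> i Hocc.
have Hx : x i = La.
  have := Hocc 0; rewrite addn0 /Wf iterS -/(Wf k) /Wstep sigma_a_head; apply.
  by rewrite size_cat addn1.
have [j Ej] := a_start Hx.
have Hj : occ (Wf k) j by apply: desub; rewrite -Ej -WfS.
by rewrite Ej -AF; apply: A_mono; apply: IH2.
Qed.

Lemma lext {p i e} : per p i e -> exists i', i' <= i /\ per p i' e /\ LM p i'.
Proof.
elim: i => [|i IH] H; first by exists 0; split => //; split => //; left.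
case: (x i =P x (i + p)) => Heq.
  have Hp : per p i e.
    move=> s H1 H2; case: (ltngtP i s) => H3; [by apply: H | lia | by rewrite -H3].
  have [i' [H1 H2]] := IH Hp; exists i'; split => //; lia.
by exists i.+1; split => //; split => //; right.
Qed.

Definition cube i L := per L i (i + 3 * L).

Lemma ell_small {k} : k <= 2 -> ell k < 3 * trib k.
Proof. by case: k => [|[|[|k]]]. Qed.

Lemma classify {i L} : 0 < L -> cube i L -> exists j d, L = trib j.+3 /\ d <= ev j /\
  F j.+3 + d <= i /\ (forall r, r < L -> x (i + r) = x (F j.+3 + d + r)).
Proof.
move=> HL Hc.
have [i' [Hi' [Hper HLM]]] := lext Hc.
have [k [Ek [Hlen Hocc]]] := runs HL Hper HLM ltac:(lia).
have [Hocc2 Hmin] := first_occ k.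
have Hk : 2 < k.
  case: (leqP k 2) => // Hk; have := ell_small Hk; lia.
have Ek3 : k = (k - 3).+3 by lia.
move: Hocc Hocc2 Hmin Hlen Ek; rewrite Ek3; set j := k - 3 => Hocc Hocc2 Hmin Hlen Ek.
exists j, (i - i'); split => //.
have := ell3 j; move=> Hell.
split; first lia.
split; first by have := Hmin _ Hocc; lia.
move=> r Hr.
have E1 : i + r = i' + (i - i' + r) by lia.
rewrite E1 Hocc; last by rewrite -/(ell _); lia.
rewrite -addnA Hocc2 //; rewrite -/(ell _); lia.
Qed.

Lemma xper j r : r + trib j.+3 < ell j.+3 -> x (F j.+3 + r) = x (F j.+3 + r + trib j.+3).
Proof.
move=> H; have [Ho _] := first_occ j.+3.
rewrite Ho; last by rewrite -/(ell _); lia.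
by rewrite -addnA Ho ?W_nth_per // -/(ell _); lia.
Qed.

Lemma cube_F j d : d <= ev j -> cube (F j.+3 + d) (trib j.+3).
Proof.
move=> Hd s H1 H2.
have Hell := ell3 j.
have E : s = F j.+3 + (s - F j.+3) by lia.
rewrite E xper //; lia.
Qed.

Lemma xmod j c a : a + c * trib j.+3 < ell j.+3 ->
  x (F j.+3 + a + c * trib j.+3) = x (F j.+3 + a).
Proof.
elim: c => [|c IH] H; first by rewrite mul0n addn0.
have E : F j.+3 + a + c.+1 * trib j.+3 = F j.+3 + (a + c * trib j.+3) + trib j.+3 by rewrite mulSn; lia.
rewrite E -xper; last by rewrite mulSn in H; lia.
rewrite addnA IH //; rewrite mulSn in H; lia.
Qed.

Lemma ell_bound j : ell j.+2 <= 3 * trib j.+3.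
Proof.
case: j => [|j]; first by [].
rewrite ell3 (trib_rec j.+1); have := ev_lt j; lia.
Qed.

Lemma root_distinct j d1 d2 : d1 < d2 -> d2 <= ev j ->
  ~ (forall r, r < trib j.+3 -> x (F j.+3 + d1 + r) = x (F j.+3 + d2 + r)).
Proof.
move=> H12 H2 Heq.
set t := trib j.+3 in Heq *.
have Hell := ell3 j.
have Hev := ev_lt j.
have Ht := trib_mono (ltnW (ltnW (leqnn j.+3))) : trib j.+1 <= t.
pose dl := d2 - d1.
have Hper : per dl (F j.+3 + d1) (F j.+3 + d2 + 3 * t).
  move=> s Hs1 Hs2.
  pose r := s - F j.+3 - d1.
  have Hr : r < 3 * t by rewrite /r /dl in Hs2 *; lia.
  have Er := divn_eq r t.
  have Ha : r %% t < t by apply: ltn_pmod; have := trib_ge j.+3; rewrite /t; lia.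
  have E1 : s = F j.+3 + (d1 + r %% t) + r %/ t * t by rewrite /r in Er; lia.
  have E2 : s + dl = F j.+3 + (d2 + r %% t) + r %/ t * t by rewrite /dl /r in Er *; lia.
  rewrite E2 E1 !xmod; [| lia | lia].
  rewrite !addnA; exact: Heq.
have [i' [Hi' [Hper' HLM]]] := lext Hper.
have Hdl : 0 < dl by rewrite /dl; lia.
have [k [Ek [Hlen _]]] := runs Hdl Hper' HLM ltac:(rewrite /dl; lia).
have Hk : k < j.+3 by apply: trib_ltI; rewrite -Ek /dl -/t; lia.
have := @ell_mono k j.+2 ltac:(lia).
have := ell_bound j.
rewrite -/t; rewrite /dl in Hlen Hdl; lia.
Qed.


Arguments nth_sub i {n r}.

Lemma sub_eq a b L : sub a L = sub b L <-> forall r, r < L -> x (a + r) = x (b + r).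
Proof.
split.
- move=> E r Hr; by rewrite -(nth_sub a Hr) -(nth_sub b Hr) E.
- move=> H; apply: sub_eqP; first by rewrite size_sub.
  by move=> r Hr; rewrite nth_sub // H.
Qed.

Lemma cube_iff i L : cube i L <-> sub i L = sub (i + L) L /\ sub (i + L) L = sub (i + 2 * L) L.
Proof.
split.
- move=> H; split; apply/sub_eq => r Hr.
  + by rewrite H; [congr x; lia | lia | lia].
  + by rewrite H; [congr x; lia | lia | lia].
- move=> [/sub_eq H1 /sub_eq H2] s Hs1 Hs2.
  case: (ltnP s (i + L)) => H.
  + have := H1 (s - i) ltac:(lia); rewrite subnKC //; move=> ->; congr x; lia.
  + have := H2 (s - i - L) ltac:(lia).
    have -> : i + L + (s - i - L) = s by lia.
    move=> ->; congr x; lia.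
Qed.

Lemma sub3 i L : sub i (3 * L) = sub i L ++ sub (i + L) L ++ sub (i + 2 * L) L.
Proof.
have -> : 3 * L = L + (L + L) by lia.
rewrite subD subD; congr (_ ++ (_ ++ sub _ _)); lia.
Qed.

Lemma infix_sub u n : infix u (sub 0 n) <-> exists i, i + size u <= n /\ sub i (size u) = u.
Proof.
split.
- move=> /infixP [a [b E]].
  have Hn : n = size a + size u + size b by rewrite -(size_sub 0 n) E !size_cat addnA.
  exists (size a); split; first lia.
  have := congr1 (fun s => take (size u) (drop (size a) s)) E.
  rewrite /= drop_size_cat // take_size_cat // drop_sub add0n take_sub //.
  by rewrite Hn -addnA addKn leq_addr.
- move=> [i [H1 H2]]; apply/infixP.
  exists (sub 0 i), (sub (i + size u) (n - i - size u)).
  have -> : n = i + (size u + (n - i - size u)) by lia.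
  by rewrite subD subD add0n H2; congr (_ ++ (_ ++ sub _ _)); lia.
Qed.

Lemma infix_factors w s : infix w s -> w \in factors s.
Proof.
move=> /infixP [a [b E]].
apply/flatten_mapP; exists (size w).
  by rewrite mem_iota E !size_cat add0n ltnS leq0n (leq_trans (leq_addr (size b) _) (leq_addl (size a) _)).
apply/mapP; exists (size a); first by rewrite mem_iota E !size_cat add0n ltnS leq0n leq_addr.
by rewrite E drop_size_cat // take_size_cat.
Qed.

Definition s_ k := F k + 3 * trib k.
Definition cnt k n := minn (ev (k - 3)).+1 (n.+1 - s_ k).
Definition rt (kd : nat * nat) := sub (F kd.1 + kd.2) (trib kd.1).
Definition pairs n := [seq (k, d) | k <- iota 3 n, d <- iota 0 (cnt k n)].

Lemma mem_pairs n k d : ((k, d) \in pairs n) = (3 <= k < n + 3) && (d < cnt k n).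
Proof.
apply/allpairsPdep/andP.
- move=> [k' [d' [H1 H2 [-> ->]]]]; move: H1 H2; rewrite !mem_iota; lia.
- move=> [H1 H2]; exists k, d; split => //; rewrite mem_iota; lia.
Qed.

Lemma mem_roots n w : (w \in cube_roots (Tprefix n)) = (w \in map rt (pairs n)).
Proof.
rewrite /cube_roots mem_undup mem_filter Tprefix_sub.
apply/idP/idP.
- move=> /andP[/andP[Hw H3] _].
  have [i [Hi Hs]] := (infix_sub (w ++ w ++ w) n).1 H3.
  move: Hi Hs; rewrite !size_cat; set L := size w => Hi Hs.
  have E3 : L + (L + L) = 3 * L by lia.
  rewrite E3 sub3 in Hs.
  have [Ha [Hb Hc]] : sub i L = w /\ sub (i + L) L = w /\ sub (i + 2 * L) L = w.
    move/eqP: Hs; rewrite eqseq_cat ?size_sub // => /andP[/eqP -> ].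
    by rewrite eqseq_cat ?size_sub // => /andP[/eqP -> /eqP ->].
  have Hc3 : cube i L by apply/cube_iff; rewrite Ha Hb Hc.
  have [j [d [EL [Hd [HF Hx]]]]] := classify Hw Hc3.
  apply/mapP; exists (j.+3, d); last first.
    rewrite /rt /= -EL -{1}Ha; apply/sub_eq => r Hr; rewrite Hx //.
  rewrite mem_pairs /cnt /s_.
  have -> : j.+3 - 3 = j by lia.
  have := trib_ge j.+3; rewrite -EL; lia.
- move=> /mapP [[k d]]; rewrite mem_pairs /cnt /s_ => /andP[/andP[Hk1 Hk2] Hd] ->.
  have Ek : k = (k - 3).+3 by lia.
  move: Hd; rewrite Ek; set j := k - 3; rewrite /rt /=.
  have -> : j.+3 - 3 = j by lia.
  move=> Hd.
  have Hc := @cube_F j d ltac:(lia).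
  have [H1 H2] := (cube_iff _ _).1 Hc.
  have Hinf : infix (rt (j.+3, d) ++ rt (j.+3, d) ++ rt (j.+3, d)) (sub 0 n).
    apply/infix_sub; exists (F j.+3 + d).
    have Hsz : size (rt (j.+3, d) ++ rt (j.+3, d) ++ rt (j.+3, d)) = 3 * trib j.+3.
      by rewrite !size_cat /rt /= size_sub; lia.
    rewrite Hsz; split; first by move: Hd; rewrite leq_min => /andP[_ H]; lia.
    by rewrite sub3 /rt /= -H2 -H1.
  rewrite /rt /= in Hinf *; rewrite Hinf andbT size_sub.
  have -> : 0 < trib j.+3 by have := trib_ge j.+3; lia.
  rewrite ?andbT.
  apply: infix_factors; apply: infix_trans Hinf; exact: prefix_infix.
Qed.


Lemma uniq_pairs_gen (s : seq nat) (c : nat -> nat) :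
  uniq s -> uniq [seq (k, d) | k <- s, d <- iota 0 (c k)].
Proof.
elim: s => //= k s IH /andP[Hk Hs].
rewrite cat_uniq IH // andbT; apply/andP; split.
  by rewrite map_inj_uniq ?iota_uniq // => a b [].
apply/hasPn => kd /allpairsPdep [k' [d' [Hk' _ ->]]].
apply/negP => /mapP [d'' _ [E _]].
by rewrite -E Hk' in Hk.
Qed.

Lemma cnt_le {k n d} : d < cnt k n -> d <= ev (k - 3).
Proof. by rewrite /cnt leq_min => /andP[H _]. Qed.

Lemma uniq_roots n : uniq (map rt (pairs n)).
Proof.
rewrite map_inj_in_uniq ?uniq_pairs_gen ?iota_uniq //.
move=> [k d] [k' d']; rewrite !mem_pairs => /andP[/andP[Hk1 _] Hd] /andP[/andP[Hk1' _] Hd'].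
rewrite /rt /= => E.
have Ek : k = k' by apply: trib_inj; rewrite -(size_sub (F k + d) (trib k)) E size_sub.
subst k'.
have H1 := cnt_le Hd; have H2 := cnt_le Hd'.
have Ek3 : k = (k - 3).+3 by lia.
move: E H1 H2; rewrite Ek3; set j := k - 3.
have -> : j.+3 - 3 = j by lia.
move=> /sub_eq E H1 H2.
case: (ltngtP d d') => H //.
- by exfalso; apply: (@root_distinct j d d') => // r Hr; rewrite E.
- by exfalso; apply: (@root_distinct j d' d) => // r Hr; rewrite E.
- by rewrite H.
Qed.

Lemma C_sum n : C n = sumn [seq cnt k n | k <- iota 3 n].
Proof.
rewrite /C (perm_size (uniq_perm (undup_uniq _) (uniq_roots n) (mem_roots n))).
rewrite size_map /pairs size_allpairs_dep.
by congr sumn; apply: eq_map => k; rewrite size_iota.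
Qed.


Lemma s_eq k : s_ k = trib k.+3 + 2 * trib k.
Proof. by rewrite /s_ /F trib_rec; lia. Qed.

Lemma s_lt k : s_ k < s_ k.+1.
Proof. rewrite !s_eq; have := tribS k; have := tribS k.+3; lia. Qed.

Lemma s_mono k k' : k <= k' -> s_ k <= s_ k'.
Proof.
move=> /subnK <-; elim: (k' - k) => // d IH; rewrite addSn; have := s_lt (d + k); lia.
Qed.
Arguments s_mono {k k'}.

Lemma s_ge k : k < s_ k.
Proof. rewrite s_eq; have := trib_ge k.+3; lia. Qed.

Lemma s3 : s_ 3 = 58. Proof. by []. Qed.

Lemma ev_closed j : 2 * ev j.+1 + 3 = trib j.+2 + trib j.
Proof.
suff : [/\ 2 * ev j.+1 + 3 = trib j.+2 + trib j,
           2 * ev j.+2 + 3 = trib j.+3 + trib j.+1 &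
           2 * ev j.+3 + 3 = trib j.+4 + trib j.+2] by case.
elim: j => [|j [H1 H2 H3]]; first by [].
split => //.
have R0 := trib_rec j; have R1 := trib_rec j.+1; have R2 := trib_rec j.+2.
rewrite ev3; lia.
Qed.

Lemma s_gap j : s_ j.+3 + ev j < s_ j.+4.
Proof.
rewrite !s_eq; have := ev_lt j.
have R0 := trib_rec j; have R1 := trib_rec j.+1; have R2 := trib_rec j.+2; have R3 := trib_rec j.+3; have R4 := trib_rec j.+4; lia.
Qed.

Definition SS j := sumn [seq (ev i).+1 | i <- iota 0 j].

Lemma SSS j : SS j.+1 = SS j + (ev j).+1.
Proof. by rewrite /SS -addn1 iotaD map_cat sumn_cat /= addn0. Qed.

Lemma SS_closed j : 2 * SS j.+1 + j + 4 = trib j.+2 + trib j.+1.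
Proof.
elim: j => [|j IH]; first by [].
rewrite SSS; have := ev_closed j.
have R0 := trib_rec j; lia.
Qed.

Lemma iden3 J : 2 * (s_ J.+3 + ev J) + 3 + trib J.+4 = 3 * trib J.+4.+2.
Proof.
rewrite s_eq.
case: J => [|J]; first by [].
have := ev_closed J.
have R0 := trib_rec J; have R1 := trib_rec J.+1; have R2 := trib_rec J.+2; have R3 := trib_rec J.+3; have R4 := trib_rec J.+4; have R5 := trib_rec J.+4.+1; lia.
Qed.

Lemma iden4 J : 2 * SS J + 2 + 4 * trib J.+4.+2 + J + 1 = 2 * s_ J.+3 + trib J.+4.+1 + 3 * trib J.+4.
Proof.
rewrite s_eq.
case: J => [|J]; first by [].
have := SS_closed J.
have R0 := trib_rec J; have R1 := trib_rec J.+1; have R2 := trib_rec J.+2; have R3 := trib_rec J.+3; have R4 := trib_rec J.+4; have R5 := trib_rec J.+4.+1; lia.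
Qed.

Lemma sumn0 (f : nat -> nat) s : {in s, forall k, f k = 0} -> sumn (map f s) = 0.
Proof.
elim: s => //= a s IH H; rewrite H ?mem_head // IH // => k Hk; apply: H; by rewrite in_cons Hk orbT.
Qed.

Lemma count_main n J : s_ J.+3 <= n < s_ J.+4 ->
  sumn [seq cnt k n | k <- iota 3 n] = SS J + minn (ev J).+1 (n.+1 - s_ J.+3).
Proof.
move=> /andP[H1 H2].
have HJ : J < n by have := s_ge J.+3; lia.
have E : iota 3 n = iota 3 J ++ J.+3 :: iota J.+4 (n - J - 1).
  have {1}-> : n = J + (1 + (n - J - 1)) by lia.
  rewrite iotaD iotaD /=.
  have -> : 3 + J = J.+3 by lia.
  by have -> : J.+3 + 1 = J.+4 by lia.
rewrite E map_cat sumn_cat /=.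
rewrite (@sumn0 _ (iota J.+4 _)); last first.
  move=> k; rewrite mem_iota => /andP[Hk _].
  rewrite /cnt; have := @s_mono J.+4 k ltac:(lia) => Hs.
  have -> : n.+1 - s_ k = 0 by lia.
  by rewrite minn0.
rewrite addn0.
congr (_ + _); last by rewrite /cnt; have -> : J.+3 - 3 = J by lia.
rewrite -[in X in iota X _](addn0 3) iotaDl -map_comp /SS.
congr sumn; apply/eq_in_map => i; rewrite mem_iota => /andP[_ Hi] /=.
have := s_gap i; have := @s_mono i.+4 J.+3 ltac:(lia).
move=> Hm Hg; rewrite /cnt.
have -> : 3 + i - 3 = i by lia.
have -> : 3 + i = i.+3 by lia.
apply/minn_idPl; lia.
Qed.

Import Order.TTheory GRing.Theory Num.Theory.
Local Open Scope ring_scope.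

Ltac castH H := let H' := fresh "C" in
  have H' := f_equal (GRing.natmul (1 : rat)) H; rewrite ?natrD ?natrM in H'.

Theorem theoremC :
  (forall n : nat, (1 <= n <= 57)%N -> C n = 0%N) /\
  (forall n : nat, (58 <= n)%N ->
     (exists m : nat, (4 <= m)%N /\
        (trib (m - 1) + 2 * trib (m - 4) <= n < trib m + 2 * trib (m - 3))%N) /\
     (forall m : nat, (4 <= m)%N ->
        (trib (m - 1) + 2 * trib (m - 4) <= n < trib m + 2 * trib (m - 3))%N ->
        (7 <= m)%N /\
        (C n)%:R =
          ((if n%:R <= (3 * (trib (m - 1))%:R - (trib (m - 3))%:R - 3) / 2 :> rat
           then n%:R - (4 * (trib (m - 1))%:R - (trib (m - 2))%:R
                        - 3 * (trib (m - 3))%:R + m%:R - 6) / 2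
           else ((trib (m - 5))%:R + (trib (m - 6))%:R - m%:R + 3) / 2) : rat))).
Proof.
split.
  move=> n /andP[H1 H2]; rewrite C_sum sumn0 // => k.
  rewrite mem_iota => /andP[Hk _]; rewrite /cnt.
  have := @s_mono 3 k Hk; rewrite s3 => Hs.
  have -> : (n.+1 - s_ k = 0)%N by lia.
  by rewrite minn0.
move=> n Hn.
have [J HJ] : exists J, (s_ J.+3 <= n < s_ J.+4)%N.
  pose P := fun J => (s_ J.+3 <= n)%N.
  have exP : exists J, P J by exists 0%N; rewrite /P s3.
  have bnd : forall J, P J -> (J <= n)%N by move=> J; rewrite /P; have := s_ge J.+3; lia.
  case: (ex_maxnP exP bnd) => J PJ Hmax; exists J; apply/andP; split => //.
  rewrite ltnNge; apply/negP => H; have := Hmax J.+1 H; lia.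
split.
  exists (J + 7)%N; rewrite !s_eq in HJ.
  have -> : (J + 7 - 1 = J.+4.+2)%N by lia.
  have -> : (J + 7 - 4 = J.+3)%N by lia.
  have -> : (J + 7 - 3 = J.+4)%N by lia.
  have -> : (J + 7 = J.+4.+3)%N by lia.
  by split.
move=> m Hm /andP[Hlo Hhi].
have Es1 : (trib (m - 1) + 2 * trib (m - 4) = s_ (m - 4))%N.
  by rewrite s_eq; congr (trib _ + _)%N; lia.
have Es2 : (trib m + 2 * trib (m - 3) = s_ (m - 4).+1)%N.
  by rewrite s_eq; congr (trib _ + 2 * trib _)%N; lia.
have Hm7 : (7 <= m)%N.
  case: (leqP 7 m) => // H; have := @s_mono (m - 4).+1 3 ltac:(lia); rewrite s3; lia.
split => //.
have [K EK] : exists K, m = (K + 7)%N by exists (m - 7)%N; lia.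
subst m.
have HK : (s_ K.+3 <= n < s_ K.+4)%N.
  have E1 : (K + 7 - 4 = K.+3)%N by lia.
  by rewrite Es1 Es2 E1 in Hlo Hhi; rewrite Hlo Hhi.
rewrite C_sum (@count_main n K HK).
have -> : (K + 7 - 1 = K.+4.+2)%N by lia.
have -> : (K + 7 - 2 = K.+4.+1)%N by lia.
have -> : (K + 7 - 3 = K.+4)%N by lia.
have -> : (K + 7 - 5 = K.+2)%N by lia.
have -> : (K + 7 - 6 = K.+1)%N by lia.
have I3 := iden3 K; have I4 := iden4 K; have I5 := SS_closed K; have I6 := SSS K.
move: HK => /andP[HK1 HK2].
move: I3 I4 I5 I6 HK1; clear.
generalize (s_ K.+3) (ev K) (SS K) (SS K.+1) => S e Q Q1 I3 I4 I5 I6 HK1.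
castH I3.
have HT : (3 * (trib K.+4.+2)%:R - (trib K.+4)%:R - 3) / 2 = ((S + e)%N%:R : rat).
  rewrite natrD; lra.
rewrite HT ler_nat.
case: (leqP n (S + e)) => Hn2.
  have -> : minn e.+1 (n.+1 - S) = (n.+1 - S)%N by apply/minn_idPr; lia.
  have E : (Q + (n.+1 - S) + S = Q + n + 1)%N by lia.
  castH E; castH I4.
  rewrite natrD; lra.
have -> : minn e.+1 (n.+1 - S) = e.+1 by apply/minn_idPl; lia.
rewrite -I6; castH I5.
rewrite natrD; lra.
Qed.
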